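(* Suppose $\rho,\sigma\in\mathbb{C}^{d\times d}$ are quantum states with $D_H^2(\rho\|\sigma)\le\varepsilon$, where $0 < \varepsilon \le 2$. Then for $\sigma' = \Delta_{\varepsilon/2}(\sigma)$ we have $D_{KL}(\rho\|\sigma') \le 4\varepsilon\,(2 + \ln(2d/\varepsilon))$.
   Context: $D_H^2(\rho\|\sigma) = \mathrm{tr}((\sqrt\rho-\sqrt\sigma)^2)$. For $0\le\epsilon\le1$, $\Delta_\epsilon(\sigma) = (1-\epsilon)\sigma + \epsilon I/d$. $D_{KL}(\rho\|\sigma)=\mathrm{tr}(\rho(\ln\rho-\ln\sigma))$. *)

(* Defs.v *)
From HB Require Import structures.
From mathcomp Require Import all_boot all_order all_algebra.
From mathcomp Require Import sesquilinear spectral.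
From mathcomp Require Import complex.
From mathcomp Require Import reals exp.
Set Implicit Arguments. Unset Strict Implicit. Unset Printing Implicit Defensive.
Import Order.TTheory GRing.Theory Num.Theory.
Local Open Scope ring_scope.
Local Open Scope complex_scope.
Local Open Scope sesquilinear_scope.

Section QDefs.
Variable R : realType.
Local Notation C := R[i].

Definition adj d (A : 'M[C]_d) : 'M[C]_d := A ^t*.

Definition psd d (A : 'M[C]_d) : Prop :=
  adj A = A /\ forall v : 'rV[C]_d, 0 <= (v *m A *m v ^t*) 0 0.

Definition is_state d (A : 'M[C]_d) : Prop := psd A /\ \tr A = 1.

(* functional calculus for a Hermitian matrix A = U^* diag(l) U (spectral.v):
   f(A) := U^* diag(f(l)) U, with f : R -> R applied to the (real) eigenvalues *)
Definition mxfun (f : R -> R) d (A : 'M[C]_d) : 'M[C]_d :=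
  (spectralmx A) ^t* *m
    diag_mx (\row_i (f (complex.Re (spectral_diag A 0 i)))%:C) *m spectralmx A.

Definition mxsqrt d (A : 'M[C]_d) := mxfun (@Num.sqrt R) A.
(* matrix logarithm; uses ln 0 = 0 (mathcomp-analysis), i.e. the usual
   convention 0 ln 0 = 0 / log taken on the support *)
Definition mxln d (A : 'M[C]_d) := mxfun (@ln R) A.

Definition hellinger2 d (rho sigma : 'M[C]_d) : C :=
  \tr ((mxsqrt rho - mxsqrt sigma) *m (mxsqrt rho - mxsqrt sigma)).

Definition depol d (eps : R) (sigma : 'M[C]_d) : 'M[C]_d :=
  (1 - eps)%:C *: sigma + (eps / d%:R)%:C *: 1%:M.

Definition DKL d (rho sigma : 'M[C]_d) : C :=
  \tr (rho *m (mxln rho - mxln sigma)).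

End QDefs.

(* Main.v *)
Require Import Defs.
From HB Require Import structures.
From mathcomp Require Import all_boot all_order all_algebra.
From mathcomp Require Import sesquilinear spectral.
From mathcomp Require Import complex.
From mathcomp Require Import reals exp.
From mathcomp Require Import ring lra.
Import Order.TTheory GRing.Theory Num.Theory.
Local Open Scope ring_scope.
Local Open Scope complex_scope.

Section RealPart.
Variable R : realType.

Lemma ln_le_sub1 {x : R} : 0 < x -> ln x <= x - 1.
Proof.
move=> x0; have H := @le_ln1Dx R (x - 1).
have E : 1 + (x - 1) = x by rewrite addrC subrK.
rewrite E in H; apply: H; lra.
Qed.

Lemma h_bound (M t : R) : 1 <= M -> 0 <= t -> t <= M ->
  t * ln t - t + 1 <= (16/3 + 8/3 * ln M) * (Num.sqrt t - 1) ^+ 2.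
Proof.
move=> M1 t0 tM.
have lM0 : 0 <= ln M by apply: ln_ge0.
have [t9|t9] := lerP t 9.
- set w := Num.sqrt (Num.sqrt t).
  have w0 : 0 <= w by apply: sqrtr_ge0.
  have st : Num.sqrt t = w ^+ 2 by rewrite /w sqr_sqrtr // sqrtr_ge0.
  have tw : t = w ^+ 4.
    by rewrite -[t]sqr_sqrtr // st -exprM.
  have w3 : w ^+ 2 <= 3.
    rewrite -st; have -> : (3:R) = Num.sqrt 9.
      by rewrite (_ : (9:R) = 3 ^+ 2) ?sqrtr_sqr ?ger0_norm // expr2 -natrM.
    by rewrite ler_sqrt //; lra.
  have key : t * ln t <= 4 * t * (w - 1).
    have [->|tp] := eqVneq t 0; first by rewrite !(mul0r, mulr0).
    have tpos : 0 < t by rewrite lt_neqAle eq_sym tp t0.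
    have wpos : 0 < w.
      by rewrite /w !sqrtr_gt0.
    rewrite tw lnXn // -mulr_natr.
    have H1 := ln_le_sub1 wpos; have H2 := exprn_ge0 4 w0.
    set W := w ^+ 4 in H2 *; set l := ln w in H1 *; nra.
  rewrite st; apply: (le_trans (lerD (lerD key (lexx _)) (lexx _))).
  rewrite tw.
  have K5 : 5 <= 16/3 + 8/3 * ln M by lra.
  apply: (@le_trans _ _ (5 * (w ^+ 2 - 1) ^+ 2)); last first.
    by apply: ler_wpM2r; [apply: sqr_ge0 | exact: K5].
  have e : 5 * (w ^+ 2 - 1) ^+ 2 - (4 * w ^+ 4 * (w - 1) - w ^+ 4 + 1)
     = 2 * (w - 1) ^+ 2 * (2 * w * (3 - w ^+ 2) + (w - 1) ^+ 2 + 1) by ring.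
  have p : 0 <= 2 * (w - 1) ^+ 2 * (2 * w * (3 - w ^+ 2) + (w - 1) ^+ 2 + 1).
    apply: mulr_ge0; first by apply: mulr_ge0; [lra| apply: sqr_ge0].
    have := sqr_ge0 (w - 1); have : 0 <= 2 * w * (3 - w ^+ 2).
      by apply: mulr_ge0; [lra | lra].
    lra.
  lra.
- have st3 : 3 <= Num.sqrt t.
    have -> : (3:R) = Num.sqrt 9.
      by rewrite (_ : (9:R) = 3 ^+ 2) ?sqrtr_sqr ?ger0_norm // expr2 -natrM.
    rewrite ler_sqrt; lra.
  have lt : ln t <= ln M by rewrite ler_ln // posrE; lra.
  have sq : 4/9 * t <= (Num.sqrt t - 1) ^+ 2.
    rewrite -{1}[t]sqr_sqrtr //; nra.
  have : t * ln t <= t * ln M by rewrite ler_wpM2l.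
  nra.
Qed.

End RealPart.

Section RealMain.
Variable R : realType.

Lemma point_bound (K M p q : R) : 1 <= M -> 0 <= p -> 0 < q -> p <= M * q ->
  K = 16/3 + 8/3 * ln M ->
  p * ln p - p * ln q - p + q <= K * (Num.sqrt p - Num.sqrt q) ^+ 2.
Proof.
move=> M1 p0 q0 pMq ->.
have t0 : 0 <= p / q by rewrite divr_ge0 // ltW.
have tM : p / q <= M by rewrite ler_pdivrMr.
have H := @h_bound R _ _ M1 t0 tM.
have sq0 : 0 < Num.sqrt q by rewrite sqrtr_gt0.
have E1 : p * ln p - p * ln q - p + q = q * (p / q * ln (p / q) - p / q + 1).
  have [->|pp] := eqVneq p 0; first by rewrite !(mul0r, mulr0); ring.
  have ppos : 0 < p by rewrite lt_neqAle eq_sym pp p0.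
  rewrite ln_div ?posrE //.
  field; rewrite gt_eqF //.
have E2 : (Num.sqrt p - Num.sqrt q) ^+ 2 = q * (Num.sqrt (p / q) - 1) ^+ 2.
  rewrite sqrtrM // sqrtrV ?ltW //.
  rewrite -{2}[q]sqr_sqrtr ?ltW //.
  field; rewrite gt_eqF //.
by rewrite E1 E2 mulrCA ler_wpM2l // ltW.
Qed.

End RealMain.

Section RealMain2.
Variable R : realType.

Lemma real_main (d : nat) (c : 'I_d -> 'I_d -> R) (p s : 'I_d -> R) (eps : R) :
  (0 < d)%N ->
  (forall i j, 0 <= c i j) ->
  (forall i, \sum_j c i j = 1) -> (forall j, \sum_i c i j = 1) ->
  (forall i, 0 <= p i) -> \sum_i p i = 1 ->
  (forall j, 0 <= s j) -> \sum_j s j = 1 ->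
  0 < eps -> eps <= 2 ->
  2 - 2 * (\sum_i \sum_j c i j * (Num.sqrt (p i) * Num.sqrt (s j))) <= eps ->
  \sum_i p i * ln (p i)
   - \sum_i \sum_j c i j * (p i * ln ((1 - eps / 2) * s j + eps / 2 / d%:R))
  <= 4 * eps * (2 + ln (2 * d%:R / eps)).
Proof.
move=> d0 c0 rowc colc p0 sp s0 ss e0 e2 hel.
set x := eps / 2.
set q := fun j => (1 - x) * s j + x / d%:R.
have x0 : 0 < x by rewrite /x; lra.
have x1 : x <= 1 by rewrite /x; lra.
have dpos : 0 < d%:R :> R by rewrite ltr0n.
have xd : 0 < x / d%:R by rewrite divr_gt0.
have qge j : x / d%:R <= q j.
  rewrite /q lerDr; apply: mulr_ge0 => //; lra.
have qpos j : 0 < q j by apply: lt_le_trans (qge j).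
have sumq : \sum_j q j = 1.
  rewrite /q big_split /= -mulr_sumr ss sumr_const card_ord mulr1.
  by rewrite -[(x / d%:R) *+ d]mulr_natr divfK ?gt_eqF // subrK.
have ple1 i : p i <= 1.
  rewrite -sp (bigD1 i) //= lerDl; apply: sumr_ge0 => j _; exact: p0.
set M := 2 * d%:R / eps.
have M1 : 1 <= M.
  rewrite /M ler_pdivlMr // mul1r.
  have : 1 <= d%:R :> R by rewrite ler1n.
  lra.
have Mx : M * (x / d%:R) = 1.
  rewrite /M /x; field; rewrite ?gt_eqF //.
have pMq i j : p i <= M * q j.
  apply: (le_trans (ple1 i)); rewrite -Mx ler_wpM2l //.
  by apply: le_trans M1.
set K := 16/3 + 8/3 * ln M.
have lM0 : 0 <= ln M by apply: ln_ge0.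
have pt i j : c i j * (p i * ln (p i) - p i * ln (q j) - p i + q j)
     <= c i j * (K * (Num.sqrt (p i) - Num.sqrt (q j)) ^+ 2).
  by rewrite ler_wpM2l //; apply: (@point_bound R K M).
have E : \sum_i \sum_j c i j * (p i * ln (p i) - p i * ln (q j) - p i + q j)
   = \sum_i p i * ln (p i) - \sum_i \sum_j c i j * (p i * ln (q j))
     - \sum_i p i + \sum_j q j.
  have -> : \sum_j q j = \sum_i \sum_j c i j * q j.
    rewrite exchange_big /=; apply: eq_bigr => j _.
    by rewrite -mulr_suml colc mul1r.
  have -> : \sum_i p i = \sum_i \sum_j c i j * p i.
    by apply: eq_bigr => i _; rewrite -mulr_suml rowc mul1r.
  have -> : \sum_i p i * ln (p i) = \sum_i \sum_j c i j * (p i * ln (p i)).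
    by apply: eq_bigr => i _; rewrite -mulr_suml rowc mul1r.
  rewrite -!sumrB -big_split /=; apply: eq_bigr => i _.
  rewrite -!sumrB -big_split /=; apply: eq_bigr => j _.
  ring.
have F : \sum_i \sum_j c i j * (K * (Num.sqrt (p i) - Num.sqrt (q j)) ^+ 2)
   = K * (\sum_i p i + \sum_j q j
          - 2 * \sum_i \sum_j c i j * (Num.sqrt (p i) * Num.sqrt (q j))).
  have -> : \sum_j q j = \sum_i \sum_j c i j * q j.
    rewrite exchange_big /=; apply: eq_bigr => j _.
    by rewrite -mulr_suml colc mul1r.
  have -> : \sum_i p i = \sum_i \sum_j c i j * p i.
    by apply: eq_bigr => i _; rewrite -mulr_suml rowc mul1r.
  rewrite [2 * _]mulr_sumr -big_split /= -sumrB mulr_sumr; apply: eq_bigr => i _.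
  rewrite [2 * _]mulr_sumr -big_split /= -sumrB mulr_sumr; apply: eq_bigr => j _.
  rewrite (_ : (Num.sqrt (p i) - Num.sqrt (q j)) ^+ 2 =
     Num.sqrt (p i) ^+ 2 + Num.sqrt (q j) ^+ 2 - 2 * (Num.sqrt (p i) * Num.sqrt (q j))); last by ring.
  rewrite !sqr_sqrtr ?p0 ?(ltW (qpos j)) //.
  ring.
set y := Num.sqrt (1 - x).
have y0 : 0 <= y by apply: sqrtr_ge0.
have y2 : y ^+ 2 = 1 - x by rewrite sqr_sqrtr //; lra.
set G := \sum_i \sum_j c i j * (Num.sqrt (p i) * Num.sqrt (q j)).
set Fs := \sum_i \sum_j c i j * (Num.sqrt (p i) * Num.sqrt (s j)) in hel *.
have GF : y * Fs <= G.
  rewrite /Fs mulr_sumr; apply: ler_sum => i _.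
  rewrite mulr_sumr; apply: ler_sum => j _.
  rewrite mulrCA ler_wpM2l // mulrCA ler_wpM2l ?sqrtr_ge0 //.
  rewrite /y -sqrtrM; last by lra.
  rewrite ler_sqrt; last by apply: ltW.
  by rewrite /q lerDl; apply: ltW.
have Fs1 : 1 - x <= Fs by rewrite /x; lra.
have tot : \sum_i \sum_j c i j * (p i * ln (p i) - p i * ln (q j) - p i + q j)
   <= \sum_i \sum_j c i j * (K * (Num.sqrt (p i) - Num.sqrt (q j)) ^+ 2).
  by apply: ler_sum => i _; apply: ler_sum => j _; exact: pt.
rewrite E F sp sumq in tot.
have K0 : 0 <= K by rewrite /K; lra.
have yF : y * (1 - x) <= y * Fs by rewrite ler_wpM2l.
have cub : 2 - 2 * (y * (1 - x)) <= 3 * x.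
  have h : 0 <= (y - 1) ^+ 2 * (2 * y + 1).
    by apply: mulr_ge0; [apply: sqr_ge0 | lra].
  have e : (y - 1) ^+ 2 * (2 * y + 1) = 2 * (y * y ^+ 2) - 3 * y ^+ 2 + 1 by ring.
  rewrite -y2; lra.
have : K * (1 + 1 - 2 * G) <= K * (3 * x).
  by rewrite ler_wpM2l //; lra.
have e3 : K * (3 * x) = 4 * eps * (2 + ln M) by rewrite /K /x; field.
rewrite -/G in tot.
have E2 : \sum_i \sum_j c i j * (p i * ln (q j)) =
  \sum_i \sum_j c i j * (p i * ln ((1 - x) * s j + x / d%:R)) by [].
rewrite E2 in tot.
lra.
Qed.

End RealMain2.

Section Mx.
Set Implicit Arguments. Unset Strict Implicit.
Local Open Scope sesquilinear_scope.
Variable R : realType.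
Local Notation C := R[i].

Lemma unit_l n (U : 'M[C]_n) : U \is unitarymx -> U *m U ^t* = 1%:M.
Proof. by move/unitarymxP. Qed.

Lemma unit_r n (U : 'M[C]_n) : U \is unitarymx -> U ^t* *m U = 1%:M.
Proof. by move=> uU; rewrite -invmx_unitary // mulVmx // unitarymx_unit. Qed.

Lemma spec_decomp n (A : 'M[C]_n) : A \is normalmx ->
  A = (spectralmx A) ^t* *m diag_mx (spectral_diag A) *m spectralmx A.
Proof.
move=> /orthomx_spectralP {1}->.
by rewrite invmx_unitary // spectral_unitarymx.
Qed.

Lemma psd_herm n (A : 'M[C]_n) : psd A -> A \is hermsymmx.
Proof.
case=> hA _; apply/is_hermitianmxP.
by rewrite expr0 scale1r; move: hA; rewrite /adj => ->.
Qed.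

Lemma conjCE (z : C) : z^* = conjc z.
Proof. by []. Qed.


Lemma eig_decomp n (A P : 'M[C]_n) (b : 'rV[C]_n) i :
  P \is unitarymx -> A = P ^t* *m diag_mx b *m P ->
  (forall v : 'rV[C]_n, 0 <= (v *m A *m v ^t*) 0 0) ->
  b 0 i = (complex.Re (b 0 i))%:C /\ 0 <= complex.Re (b 0 i).
Proof.
move=> uP AE pA.
set e : 'rV[C]_n := delta_mx 0 i.
have := pA (e *m P).
have -> : e *m P *m A *m (e *m P) ^t* = e *m diag_mx b *m e ^t*.
  rewrite AE trmx_mul map_mxM !mulmxA.
  rewrite -[e *m P *m P ^t*]mulmxA (unit_l uP) mulmx1.
  by rewrite -[_ *m P *m P ^t*]mulmxA (unit_l uP) mulmx1.
rewrite /e -rowE row_diag_mx -scalemxAl trmx_delta map_delta_mx mul_delta_mx.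
rewrite !mxE eqxx mulr1n mulr1.
case: (b 0 i) => x y; rewrite lecE /= => /andP[/eqP -> x0].
by split.
Qed.

Lemma psd_eig n (A : 'M[C]_n) i : psd A ->
  spectral_diag A 0 i = (complex.Re (spectral_diag A 0 i))%:C /\ 0 <= complex.Re (spectral_diag A 0 i).
Proof.
move=> pA; have nA := hermitian_normalmx (psd_herm pA).
move: (spectral_unitarymx A) (spec_decomp nA).
generalize (spectralmx A) (spectral_diag A) => P b uP AE.
exact: eig_decomp uP AE pA.2.
Qed.

Lemma diag_comm_fun n f (W : 'M[C]_n) (a b : 'rV[C]_n) :
  W *m diag_mx a = diag_mx b *m W ->
  W *m diag_mx (\row_i (f (complex.Re (a 0 i)))%:C)
     = diag_mx (\row_i (f (complex.Re (b 0 i)))%:C) *m W.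
Proof.
move=> comm; apply/matrixP => i j; rewrite mul_mx_diag mul_diag_mx !mxE.
have /matrixP /(_ i j) := comm.
rewrite mul_mx_diag mul_diag_mx !mxE => e.
have [->|nz] := eqVneq (W i j) 0; first by rewrite mul0r mulr0.
have ab : a 0 j = b 0 i.
  by apply: (mulfI nz); rewrite e mulrC.
by rewrite ab mulrC.
Qed.

Lemma mxfunE n f (U : 'M[C]_n) (a : 'rV[C]_n) : U \is unitarymx ->
  mxfun f (U ^t* *m diag_mx a *m U)
  = U ^t* *m diag_mx (\row_i (f (complex.Re (a 0 i)))%:C) *m U.
Proof.
move=> uU.
have nA : U ^t* *m diag_mx a *m U \is normalmx.
  apply/orthomx_spectral_subproof; exists (U, a) => //=.
  by rewrite invmx_unitary.
rewrite /mxfun.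
move: (spectral_unitarymx (U ^t* *m diag_mx a *m U)) (spec_decomp nA).
generalize (spectralmx (U ^t* *m diag_mx a *m U))
           (spectral_diag (U ^t* *m diag_mx a *m U)) => P b uP AE.
move: AE; set A := U ^t* *m diag_mx a *m U => AE.
have comm : (P *m U ^t*) *m diag_mx a = diag_mx b *m (P *m U ^t*).
  have PA : P *m A = diag_mx b *m P.
    by rewrite {1}AE !mulmxA (unit_l uP) mul1mx.
  have WA : P *m U ^t* *m diag_mx a *m U = P *m A by rewrite /A !mulmxA.
  by rewrite -[P *m U ^t* *m diag_mx a](mulmxtVK _ uU) WA PA mulmxA.
have comm2 := diag_comm_fun f comm.
move: comm2; move WE: (P *m U ^t*) => W comm2.
have PW : P = W *m U by rewrite -WE -mulmxA (unit_r uU) mulmx1.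
rewrite {2}PW mulmxA -(mulmxA _ _ W) -comm2 -WE.
by rewrite !mulmxA (unit_r uP) mul1mx.
Qed.



Lemma tr_DWDW n (W : 'M[C]_n) (a b : 'rV[C]_n) :
  \tr (diag_mx a *m W *m diag_mx b *m W ^t*)
  = \sum_i \sum_j a 0 i * b 0 j * (W i j * (W i j)^*).
Proof.
rewrite mul_diag_mx mul_mx_diag /mxtrace; apply: eq_bigr => i _.
rewrite mxE; apply: eq_bigr => j _.
rewrite !mxE.
by rewrite -!mulrA (mulrCA (W i j)).
Qed.

Lemma tr_pair n (U V : 'M[C]_n) (a b : 'rV[C]_n) :
  U \is unitarymx -> V \is unitarymx ->
  \tr ((U ^t* *m diag_mx a *m U) *m (V ^t* *m diag_mx b *m V))
  = \sum_i \sum_j a 0 i * b 0 j * ((U *m V ^t*) i j * ((U *m V ^t*) i j)^*).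
Proof.
move=> uU uV; rewrite -tr_DWDW.
rewrite trmx_mul map_mxM trmxCK.
have -> : U ^t* *m diag_mx a *m U *m (V ^t* *m diag_mx b *m V)
   = U ^t* *m (diag_mx a *m (U *m V ^t*) *m diag_mx b *m V) by rewrite !mulmxA.
rewrite [in LHS]mxtrace_mulC.
rewrite !mulmxA.
reflexivity.
Qed.


Lemma depol_decomp n (Q : 'M[C]_n) (c : 'rV[C]_n) (s : 'I_n -> R) (x : R) :
  Q \is unitarymx -> (forall j, c 0 j = (s j)%:C) ->
  depol x (Q ^t* *m diag_mx c *m Q)
  = Q ^t* *m diag_mx (\row_j ((1 - x) * s j + x / n%:R)%:C) *m Q.
Proof.
move=> uQ hc.
have -> : diag_mx (\row_j ((1 - x) * s j + x / n%:R)%:C)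
    = (1 - x)%:C *: diag_mx c + (x / n%:R)%:C *: 1%:M.
  apply/matrixP => i j; rewrite !mxE hc.
  case: (eqVneq i j) => [_|ne] /=; last by rewrite !mulr0n !mulr0 addr0.
  by rewrite !mulr1n mulr1 rmorphD rmorphM.
rewrite /depol mulmxDr mulmxDl -!scalemxAr -!scalemxAl mulmx1 (unit_r uQ).
by [].
Qed.

Lemma sum_delta n (f g : 'I_n -> C) :
  \sum_i \sum_j f i * g j * ((1%:M : 'M[C]_n) i j * ((1%:M : 'M[C]_n) i j)^*)
  = \sum_i f i * g i.
Proof.
apply: eq_bigr => i _; rewrite (bigD1 i) //= big1 ?addr0.
  by rewrite !mxE eqxx mulr1n mul1r ?rmorph1 ?conjC1 ?conjc1 mulr1.
by move=> j ne; rewrite !mxE eq_sym (negPf ne) mulr0n mul0r mulr0.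
Qed.

Lemma normsq_real (z : C) :
  z * z^* = (complex.Re (z * z^*))%:C /\ 0 <= complex.Re (z * z^*).
Proof.
have h := mulcJ_ge0 z.
move: h; case: (z * z^*) => x y; rewrite lecE /= => /andP[/eqP -> x0].
by split.
Qed.

Lemma unit_rowsum n (W : 'M[C]_n) i : W \is unitarymx ->
  \sum_j W i j * (W i j)^* = 1.
Proof.
move=> uW; have := unit_l uW; move/matrixP/(_ i i).
by rewrite !mxE eqxx mulr1n => <-; apply: eq_bigr => j _; rewrite !mxE.
Qed.

Lemma unit_colsum n (W : 'M[C]_n) j : W \is unitarymx ->
  \sum_i W i j * (W i j)^* = 1.
Proof.
move=> uW; have := unit_r uW; move/matrixP/(_ j j).
by rewrite !mxE eqxx mulr1n => <-; apply: eq_bigr => i _; rewrite !mxE mulrC.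
Qed.

Lemma tr_decomp n (P : 'M[C]_n) (b : 'rV[C]_n) : P \is unitarymx ->
  \tr (P ^t* *m diag_mx b *m P) = \sum_i b 0 i.
Proof.
move=> uP; rewrite mxtrace_mulC mulmxA (unit_l uP) mul1mx.
by rewrite mxtrace_diag.
Qed.

Lemma tr_pair_real n (U V : 'M[C]_n) (f g : 'I_n -> R) :
  U \is unitarymx -> V \is unitarymx ->
  \tr ((U ^t* *m diag_mx (\row_i (f i)%:C) *m U) *m
       (V ^t* *m diag_mx (\row_i (g i)%:C) *m V))
  = (\sum_i \sum_j complex.Re ((U *m V ^t*) i j * ((U *m V ^t*) i j)^*)
        * (f i * g j))%:C.
Proof.
move=> uU uV; rewrite (tr_pair _ _ uU uV).
move: (U *m V ^t*) => W.
rewrite rmorph_sum; apply: eq_bigr => i _.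
rewrite rmorph_sum; apply: eq_bigr => j _.
rewrite !mxE rmorphM rmorphM [in LHS](normsq_real (W i j)).1 mulrC.
reflexivity.
Qed.

Lemma tr_self_real n (U : 'M[C]_n) (f g : 'I_n -> R) :
  U \is unitarymx ->
  \tr ((U ^t* *m diag_mx (\row_i (f i)%:C) *m U) *m
       (U ^t* *m diag_mx (\row_i (g i)%:C) *m U))
  = (\sum_i f i * g i)%:C.
Proof.
move=> uU; rewrite (tr_pair _ _ uU uU) (unit_l uU) sum_delta.
rewrite rmorph_sum; apply: eq_bigr => i _.
by rewrite !mxE rmorphM.
Qed.

Lemma tr_sq n (X Y : 'M[C]_n) :
  \tr ((X - Y) *m (X - Y)) = \tr (X *m X) + \tr (Y *m Y) - 2 * \tr (X *m Y).
Proof.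
rewrite mulmxBl !mulmxBr !linearB /= (mxtrace_mulC Y X).
ring.
Qed.

Lemma tr_state n (P : 'M[C]_n) (p : 'I_n -> R) : P \is unitarymx ->
  \tr (P ^t* *m diag_mx (\row_i (p i)%:C) *m P) = 1 -> \sum_i p i = 1.
Proof.
move=> uP; rewrite (tr_decomp _ uP) => h.
apply: (@complexI R); rewrite rmorph_sum rmorph1 -h; apply: eq_bigr => i _.
by rewrite mxE.
Qed.

End Mx.

Theorem proposition2p35 (R : realType) (d : nat) (rho sigma : 'M[R[i]]_d)
    (eps : R) :
  is_state rho -> is_state sigma ->
  0 < eps -> eps <= 2 ->
  hellinger2 rho sigma <= eps%:C ->
  DKL rho (depol (eps / 2) sigma)
    <= (4 * eps * (2 + ln (2 * d%:R / eps)))%:C.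
Proof.
move=> [pr tr] [ps ts] e0 e2 hel.
have [d00|d0] := posnP d.
  subst d; move: tr; rewrite /mxtrace big_ord0 => /eqP.
  by rewrite eq_sym oner_eq0.
have nr := hermitian_normalmx (psd_herm pr).
have ns := hermitian_normalmx (psd_herm ps).
move: hel; rewrite /DKL /hellinger2.
move LE: (mxln (depol (eps / 2) sigma)) => L.
rewrite /mxln /mxsqrt /mxfun.
move: (spectral_unitarymx rho) (spec_decomp nr) (fun i => psd_eig i pr).
generalize (spectralmx rho) (spectral_diag rho) => P b uP rE eb.
move: (spectral_unitarymx sigma) (spec_decomp ns) (fun i => psd_eig i ps).
generalize (spectralmx sigma) (spectral_diag sigma) => Q c uQ sE ec.
subst rho sigma.
have [p bE p0] : exists2 p : 'I_d -> R, b = \row_i (p i)%:C & forall i, 0 <= p i.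
  exists (fun i => complex.Re (b 0 i)); last by move=> i; case: (eb i).
  apply/matrixP => i j; rewrite ord1 mxE; exact: (eb j).1.
have [s cE s0] : exists2 s : 'I_d -> R, c = \row_i (s i)%:C & forall i, 0 <= s i.
  exists (fun i => complex.Re (c 0 i)); last by move=> i; case: (ec i).
  apply/matrixP => i j; rewrite ord1 mxE; exact: (ec j).1.
subst b c; clear eb ec nr ns pr ps.
rewrite (depol_decomp (s := s) _ uQ) in LE; last by move=> j; rewrite mxE.
rewrite /mxln (mxfunE _ _ uQ) in LE.
subst L.
have rowfE (f : 'I_d -> R) (g : R -> R) :
  \row_i (g (complex.Re ((\row_i0 (f i0)%:C : 'rV[R[i]]_d) 0 i)))%:C
  = \row_i (g (f i))%:C :> 'rV[R[i]]_d.
  by apply/matrixP => i j; rewrite !mxE.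
rewrite (rowfE p Num.sqrt) (rowfE s Num.sqrt) (rowfE p (@ln R)).
rewrite (rowfE (fun j => (1 - eps / 2) * s j + eps / 2 / d%:R) (@ln R)).
move=> hel.
rewrite tr_sq (tr_self_real _ _ uP) (tr_self_real _ _ uQ) (tr_pair_real _ _ uP uQ) in hel.
rewrite mulmxBr linearB /= (tr_self_real _ _ uP) (tr_pair_real _ _ uP uQ).
have sp := tr_state uP tr.
have ss := tr_state uQ ts.
have uW : P *m (Q ^t*)%sesqui \is unitarymx by rewrite mul_unitarymx // trmxC_unitary.
move: hel; move: uW; move: (P *m (Q ^t*)%sesqui) => W uW hel.
have c0 i j : 0 <= complex.Re (W i j * (W i j)^*) := (normsq_real _).2.
have rowc i : \sum_j complex.Re (W i j * (W i j)^*) = 1.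
  apply: (@complexI R); rewrite rmorph_sum rmorph1 -(unit_rowsum i uW).
  by apply: eq_bigr => j _; rewrite [in RHS](normsq_real _).1.
have colc j : \sum_i complex.Re (W i j * (W i j)^*) = 1.
  apply: (@complexI R); rewrite rmorph_sum rmorph1 -(unit_colsum j uW).
  by apply: eq_bigr => i _; rewrite [in RHS](normsq_real _).1.
have SP : \sum_i Num.sqrt (p i) * Num.sqrt (p i) = 1.
  by rewrite -sp; apply: eq_bigr => i _; rewrite -expr2 sqr_sqrtr.
have SS : \sum_i Num.sqrt (s i) * Num.sqrt (s i) = 1.
  by rewrite -ss; apply: eq_bigr => i _; rewrite -expr2 sqr_sqrtr.
rewrite SP SS in hel.
move: hel; rewrite -(rmorph_nat (real_complex R) 2) -rmorphM -rmorphD -rmorphB lecR => hel.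
rewrite -rmorphB lecR.
apply: (@real_main R d _ p s eps d0 c0 rowc colc p0 sp s0 ss e0 e2).
lra.
Qed.
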